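(* Let $n\ge 1$, $m\in\mathbb Z_+^n$, $c_\alpha\in\mathbb C$ for $0\le\alpha\le m$ (with $c_\alpha=0$ otherwise), $P(z)=\sum_{0\le\alpha\le m}c_\alpha z^\alpha$, $X_0=\{\tau\in\mathbb Z^n:\tau\ge0,\ \tau\not\ge m\}$, and $\varphi:X_0\to\mathbb C$, extended by zero to $\mathbb Z_+^n\setminus X_0$. Let $f:\mathbb Z_+^n\to\mathbb C$ satisfy $\sum_{0\le\alpha\le m}c_\alpha f(x+\alpha)=0$ for all $x\in\mathbb Z_+^n$ and $f=\varphi$ on $X_0$, and assume $F(z)=\sum_{x\ge0}f(x)/z^{x+I}$ converges in some neighborhood of infinity. Then in that neighborhood $$P(z)F(z)=\sum_J\sum_{\tau\in\Gamma_J}\Phi_{\tau,J}(z)\,P_\tau(z),\qquad\text{where } P_\tau(z)=\sum_{\alpha\le m,\ \alpha\not\le\tau}c_\alpha z^\alpha,$$ the outer sum running over all $J\in\{0,1\}^n$.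
   Context: Notation: $x\le y$ is componentwise; $x\not\ge y$ (resp. $x\not\le y$) means $x\ge y$ (resp. $x\le y$) fails; $I=(1,\dots,1)$; $z^x=\prod z_k^{x_k}$. $\Pi_m=\{x\in\mathbb Z^n:0\le x_k\le m_k\ \forall k\}$. For $J=(j_1,\dots,j_n)\in\{0,1\}^n$, $\Gamma_J=\{x\in\Pi_m: x_k=m_k \text{ if } j_k=1,\ x_k<m_k \text{ if } j_k=0\}$; these sets partition $\Pi_m$. For $y\in\mathbb Z_+^n$, $Jy=(j_1y_1,\dots,j_ny_n)$. For $\tau\in\Gamma_J$, $\Phi_{\tau,J}(z)=\sum_{x\in\tau+J\mathbb Z_+^n}\varphi(x)/z^{x+I}$, i.e. the sum of $\varphi(\tau+Jy)/z^{\tau+Jy+I}$ over the distinct points $\tau+Jy$, $y\in\mathbb Z_+^n$ (equivalently over $y\ge0$ with $y_k=0$ whenever $j_k=0$). *)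

(* Defs.v *)
From HB Require Import structures.
From mathcomp Require Import all_boot all_order all_algebra.
From mathcomp Require Import finmap.
From mathcomp Require Import complex.
From mathcomp Require Import boolp classical_sets fsbigop reals topology normedtype.

Set Implicit Arguments.
Unset Strict Implicit.
Unset Printing Implicit Defensive.
Import Order.TTheory GRing.Theory Num.Theory.
Import numFieldNormedType.Exports.
Local Open Scope classical_set_scope.
Local Open Scope ring_scope.

Notation mindex n := {ffun 'I_n -> nat}.

Section Defs.
Variable n : nat.

Definition mle (x y : mindex n) : Prop := forall k, (x k <= y k)%N.
Definition madd (x y : mindex n) : mindex n := [ffun k => (x k + y k)%N].
Definition msucc (x : mindex n) : mindex n := [ffun k => (x k).+1].
Definition mJ (J : {ffun 'I_n -> bool}) (y : mindex n) : mindex n :=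
  [ffun k => if J k then y k else 0%N].

Definition Pi (m : mindex n) : set (mindex n) := [set x | mle x m].
Definition X0 (m : mindex n) : set (mindex n) := [set x | ~ mle m x].
Definition Gamma (m : mindex n) (J : {ffun 'I_n -> bool}) : set (mindex n) :=
  [set x | mle x m /\ forall k, if J k then x k = m k else (x k < m k)%N].
Definition shifted (tau : mindex n) (J : {ffun 'I_n -> bool}) : set (mindex n) :=
  [set x | exists y : mindex n, x = madd tau (mJ J y)].

Definition zpow (C : ringType) (z : 'I_n -> C) (x : mindex n) : C :=
  \prod_(k < n) z k ^+ x k.
End Defs.

(* Summation of families indexed by a choiceType: limit of the net of finite
   partial sums (directed by inclusion of finite sets). *)
Section Summation.
Local Open Scope fset_scope.
Definition totally {I : choiceType} : set_system {fset I} :=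
  filter_from setT (fun A => [set B | A `<=` B]).

Definition partial_sum {I : choiceType} {V : zmodType}
  (a : I -> V) (A : {fset I}) : V := \sum_(i : A) a (val i).

Definition fsum {I : choiceType} {K : numFieldType} (a : I -> K) : K :=
  lim (partial_sum a @ totally).

Definition fsum_on {I : choiceType} {K : numFieldType} (S : set I) (a : I -> K) : K :=
  fsum (fun i => if `[< S i >] then a i else 0).

Definition abs_summable {I : choiceType} {K : numFieldType} (a : I -> K) : Prop :=
  exists M : K, forall A : {fset I}, partial_sum (fun i => `|a i|) A <= M.
End Summation.

Section Series.
Variables (R : realType) (n : nat).
Local Notation C := R[i].

Definition Fser (f : mindex n -> C) (z : 'I_n -> C) : C :=
  fsum (fun x : mindex n => f x / zpow z (msucc x)).

Definition Phi (phi : mindex n -> C) (tau : mindex n) (J : {ffun 'I_n -> bool})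
  (z : 'I_n -> C) : C :=
  fsum_on (shifted tau J) (fun x => phi x / zpow z (msucc x)).

Definition Ppoly (c : mindex n -> C) (m : mindex n) (z : 'I_n -> C) : C :=
  \sum_(a \in Pi m) c a * zpow z a.

Definition Ptau (c : mindex n -> C) (m tau : mindex n) (z : 'I_n -> C) : C :=
  \sum_(a \in [set a | mle a m /\ ~ mle a tau]) c a * zpow z a.
End Series.

(* Main.v *)
Require Import Defs.
From HB Require Import structures.
From mathcomp Require Import all_boot all_order all_algebra.
From mathcomp Require Import finmap complex.
From mathcomp Require Import boolp classical_sets fsbigop reals topology normedtype.
From mathcomp Require Import cardinality.
Import Order.TTheory GRing.Theory Num.Theory.
Import numFieldNormedType.Exports.
Local Open Scope classical_set_scope.
Local Open Scope ring_scope.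

Module Helpers.
Set Implicit Arguments.
Unset Strict Implicit.
Unset Printing Implicit Defensive.
Local Open Scope complex_scope.
Notation cRe := (@complex.Re _).
Notation cIm := (@complex.Im _).
Instance totally_filter {I : choiceType} : ProperFilter (@totally I).
Proof.
eapply filter_from_proper; last by move=> A _; exists A; rewrite /= fsubset_refl.
apply: filter_fromT_filter; first by exists fset0.
by move=> A B /=; exists (A `|` B)%fset => P /=; rewrite fsubUset => /andP[].
Qed.

Lemma near_totally (I : choiceType) (P : {fset I} -> Prop) :
  (\forall B \near totally, P B) <-> exists A, forall B, (A `<=` B)%fset -> P B.
Proof.
split.
  by case=> A _ H; exists A => B AB; apply: H.
by case=> A H; exists A => // B; apply: H.
Qed.

Section Gen.
Variables (I : choiceType) (K : numFieldType).
Definition conv (a : I -> K) (l : K) := partial_sum a @ totally --> l.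

Lemma psE (a : I -> K) A : partial_sum a A = \sum_(i <- A) a i.
Proof. by rewrite /partial_sum big_seq_fsetE. Qed.

Lemma conv_fsum a l : conv a l -> fsum a = l.
Proof. move=> h; exact: cvg_lim h. Qed.

Lemma conv_uniq a l1 l2 : conv a l1 -> conv a l2 -> l1 = l2.
Proof. by move=> h1 h2; rewrite -(conv_fsum h1) -(conv_fsum h2). Qed.

Lemma conv_add a b la lb : conv a la -> conv b lb -> conv (fun i => a i + b i) (la + lb).
Proof.
move=> ha hb; rewrite /conv.
have -> : partial_sum (fun i => a i + b i) = (partial_sum a \+ partial_sum b).
  by apply/funext=> A; rewrite /partial_sum /= big_split.
exact: cvgD.
Qed.

Lemma conv_scale a la k : conv a la -> conv (fun i => k * a i) (k * la).
Proof.
move=> ha; rewrite /conv.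
have -> : partial_sum (fun i => k * a i) = (fun A => k * partial_sum a A).
  by apply/funext=> A; rewrite /partial_sum /= mulr_sumr.
apply: cvgMr. exact: ha.
Qed.

Lemma conv0 : conv (fun=> 0) 0.
Proof.
rewrite /conv.
have -> : partial_sum (fun _ : I => 0 : K) = (fun=> 0).
  by apply/funext=> A; rewrite /partial_sum big1.
exact: cvg_cst.
Qed.

Lemma conv_big (T : Type) (r : seq T) (F : T -> I -> K) (L : T -> K) :
  (forall t, conv (F t) (L t)) ->
  conv (fun i => \sum_(t <- r) F t i) (\sum_(t <- r) L t).
Proof.
move=> H; elim: r => [|t r IH].
  rewrite big_nil; have -> : (fun i => \sum_(t <- [::]) F t i) = fun=> 0.
    by apply/funext=> i; rewrite big_nil.
  exact: conv0.
rewrite big_cons; have -> : (fun i => \sum_(t0 <- t :: r) F t0 i) = 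
   fun i => F t i + \sum_(t0 <- r) F t0 i.
  by apply/funext=> i; rewrite big_cons.
exact: conv_add.
Qed.

Lemma conv_fsbig (T : choiceType) (S : set T) (F : T -> I -> K) (L : T -> K) :
  finite_set S -> (forall t, conv (F t) (L t)) ->
  conv (fun i => \sum_(t \in S) F t i) (\sum_(t \in S) L t).
Proof.
move=> fS H; rewrite fsbig_finite //.
have -> : (fun i => \sum_(t \in S) F t i) = fun i => \sum_(t <- fset_set S) F t i.
  by apply/funext=> i; rewrite fsbig_finite.
exact: conv_big.
Qed.

Lemma conv_eps a l : conv a l <-> forall e : K, 0 < e ->
  exists A, forall B, (A `<=` B)%fset -> `|l - partial_sum a B| < e.
Proof.
rewrite /conv; split.
  by move=> /cvgrPdist_lt H e e0; apply/near_totally; apply: H.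
move=> H; apply/cvgrPdist_lt => e e0; apply/near_totally; exact: H.
Qed.

End Gen.
Section Gen2.
Variables (I : choiceType) (K : numFieldType).

Lemma big_imfset_inj (J I0 : choiceType) (e : J -> I0) (B : {fset J}) (F : I0 -> K) :
  {in B &, injective e} ->
  \sum_(i <- [fset e j | j in B]%fset) F i = \sum_(j <- B) F (e j).
Proof.
move=> inj; rewrite big_imfset //=.
Qed.

Lemma conv_reindex (J : choiceType) (e : J -> I) (d : I -> J) (P : I -> bool)
  (h : I -> K) l :
  (forall y, d (e y) = y) -> (forall x, P x -> e (d x) = x) -> (forall y, P (e y)) ->
  (forall x, ~~ P x -> h x = 0) ->
  conv (fun y => h (e y)) l -> conv h l.
Proof.
move=> de ed Pe h0 /conv_eps H; apply/conv_eps => eps eps0.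
have [A' HA'] := H eps eps0.
exists [fset e y | y in A']%fset => B AB.
set B' := [fset d x | x in [fset x in B | P x]]%fset.
have A'B' : (A' `<=` B')%fset.
  apply/fsubsetP => y yA; apply/imfsetP; exists (e y) => //.
  rewrite !inE Pe andbT; apply: (fsubsetP AB); apply/imfsetP; by exists y.
have -> : partial_sum h B = partial_sum (fun y => h (e y)) B'.
  rewrite !psE /B' big_imfset_inj; last first.
    move=> x1 x2; rewrite !inE => /andP[_ P1] /andP[_ P2] dd.
    by rewrite -(ed _ P1) -(ed _ P2) dd.
  rewrite -big_fset_condE [RHS]big_mkcond /=; apply: eq_bigr => x _.
  by case: ifP => Px; [rewrite ed | rewrite h0 // Px].
exact: HA'.
Qed.

Lemma abs_reindex (J : choiceType) (e : J -> I) (h : I -> K) :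
  injective e -> abs_summable h -> abs_summable (fun y => h (e y)).
Proof.
move=> inj [M HM]; exists M => B.
have := HM [fset e y | y in B]%fset.
by rewrite !psE big_imfset_inj //; move=> x1 x2 _ _; apply: inj.
Qed.

Lemma abs_le (a b : I -> K) : (forall i, `|a i| <= `|b i|) ->
  abs_summable b -> abs_summable a.
Proof.
move=> le [M HM]; exists M => B; apply: le_trans (HM B).
rewrite !psE; exact: ler_sum.
Qed.
End Gen2.
Section Cx.
Variables (R : realType) (I : choiceType).

Lemma ps_mono (b : I -> R) (A B : {fset I}) : (forall i, 0 <= b i) ->
  (A `<=` B)%fset -> partial_sum b A <= partial_sum b B.
Proof.
move=> b0 AB; rewrite !psE (big_fsetID _ (mem A) B) /=.
have -> : \sum_(i <- [fset x in B | x \in A]%fset) b i = \sum_(i <- A) b i.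
  apply: eq_fbigl => x; rewrite !inE /=; apply/andP/idP => [[]//|xA].
  by split=> //; apply: (fsubsetP AB).
by rewrite lerDl sumr_ge0.
Qed.

Lemma real_eps (b : I -> R) N : (forall i, 0 <= b i) ->
  (forall A, partial_sum b A <= N) ->
  exists l : R, forall e, 0 < e -> exists A, forall B, (A `<=` B)%fset ->
    `|l - partial_sum b B| < e.
Proof.
move=> b0 bN; set S := range (partial_sum b).
have hS : has_sup S.
  split; first by exists (partial_sum b fset0); exists fset0.
  by exists N => _ [A _ <-].
exists (sup S) => e e0.
have [_ [A _ <-] HA] := sup_adherent e0 hS.
exists A => B AB.
have h1 : partial_sum b B <= sup S by apply: sup_upper_bound => //; exists B.
have h2 := ps_mono b0 AB.
rewrite ger0_norm ?subr_ge0 //.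
rewrite ltrBlDr -ltrBlDl; apply: lt_le_trans HA h2.
Qed.

Lemma normC_real (y : R) : `|y%:C| = `|y|%:C :> R[i].
Proof. by rewrite normc_def /= expr0n /= addr0 sqrtr_sqr. Qed.

Lemma pos_complex (eps : R[i]) : 0 < eps -> eps = (cRe eps)%:C /\ 0 < cRe eps.
Proof.
rewrite ltcE => /andP[/eqP h1 h2]; split => //.
by case: eps h1 h2 => a b /= -> _.
Qed.

Lemma conv_C (b : I -> R) (l : R) :
  (forall e, 0 < e -> exists A, forall B, (A `<=` B)%fset -> `|l - partial_sum b B| < e) ->
  conv (fun i => (b i)%:C) l%:C.
Proof.
move=> H; apply/conv_eps => eps /pos_complex [-> e0].
have [A HA] := H _ e0; exists A => B AB.
have -> : partial_sum (fun i => (b i)%:C) B = (partial_sum b B)%:C.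
  by rewrite !psE rmorph_sum.
by rewrite -rmorphB normC_real ltcR; apply: HA.
Qed.


Lemma conv_opp (K : numFieldType) (a : I -> K) l : conv a l -> conv (fun i => - a i) (- l).
Proof.
move=> h; have := conv_scale (k:=-1) h; rewrite mulN1r.
by have -> : (fun i => -1 * a i) = (fun i => - a i) by apply/funext=> i; rewrite mulN1r.
Qed.

Lemma normc_nu (x : R[i]) : `|x| = (cRe `|x|)%:C.
Proof. by rewrite normc_def. Qed.

Lemma Re_le_nu (x : R[i]) : `|cRe x| <= cRe `|x|.
Proof. by have := normc_ge_Re x; rewrite [X in _ <= X]normc_nu lecR. Qed.

Lemma Im_le_nu (x : R[i]) : `|cIm x| <= cRe `|x|.
Proof.
have := Re_le_nu (x * 'i%C); rewrite ReiNIm normrN normrM.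
have -> : `|'i%C| = 1 :> R[i] by rewrite normc_def /= expr0n expr1n add0r sqrtr1.
by rewrite mulr1.
Qed.

Lemma ex_conv (a : I -> R[i]) : abs_summable a -> exists l, conv a l.
Proof.
move=> [M HM]; set nu := fun i => cRe `|a i|.
have nuN : forall A, partial_sum nu A <= cRe M.
  move=> A; have := HM A; rewrite lecE => /andP[_]; apply: le_trans.
  by rewrite !psE raddf_sum.
have nu0 : forall i, 0 <= nu i by move=> i; apply: le_trans (Re_le_nu _).
pose u1 := fun i => cRe (a i) + nu i.
pose u3 := fun i => cIm (a i) + nu i.
have ub (u : I -> R) : (forall i, u i <= nu i + nu i) -> forall A, partial_sum u A <= cRe M + cRe M.
  move=> hu A; apply: le_trans (lerD (nuN A) (nuN A)).
  by rewrite !psE -big_split /=; apply: ler_sum => i _; apply: hu.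
have u10 : forall i, 0 <= u1 i.
  by move=> i; rewrite /u1 -lerBlDr sub0r; have := Re_le_nu (a i); rewrite ler_norml => /andP[].
have u30 : forall i, 0 <= u3 i.
  by move=> i; rewrite /u3 -lerBlDr sub0r; have := Im_le_nu (a i); rewrite ler_norml => /andP[].
have u1b : forall i, u1 i <= nu i + nu i.
  by move=> i; rewrite /u1 lerD2r; apply: le_trans (Re_le_nu _); apply: ler_norm.
have u3b : forall i, u3 i <= nu i + nu i.
  by move=> i; rewrite /u3 lerD2r; apply: le_trans (Im_le_nu _); apply: ler_norm.
have [l1 /conv_C h1] := real_eps u10 (ub _ u1b).
have [l3 /conv_C h3] := real_eps u30 (ub _ u3b).
have [ln /conv_C hn] := real_eps nu0 nuN.
have e : a = fun i => ((u1 i)%:C + - (nu i)%:C) + 'i%C * ((u3 i)%:C + - (nu i)%:C).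
  apply/funext=> i; rewrite -!rmorphB /u1 /u3 !addrK.
  exact: complexE.
rewrite e; eexists; apply: conv_add; first by apply: conv_add h1 (conv_opp hn).
by apply: conv_scale; apply: conv_add h3 (conv_opp hn).
Qed.
End Cx.
Section Main.
Variables (R : realType) (n : nat).
Implicit Types (x y a : mindex n).

Lemma finite_Pi (m : mindex n) : finite_set (Pi m).
Proof.
set N := \max_(k < n) m k.
apply: (@sub_finite_set _ _ ((fun t : {ffun 'I_n -> 'I_N.+1} => [ffun k => val (t k)]) @` setT)).
  move=> x hx; exists [ffun k => inord (x k)] => //.
  apply/ffunP => k; rewrite !ffunE /= inordK // ltnS.
  apply: leq_trans (hx k) _; exact: (leq_bigmax k).
exact/finite_image/finite_finset.
Qed.

Lemma finite_Gamma (m : mindex n) J : finite_set (Gamma m J).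
Proof. by apply: sub_finite_set (finite_Pi m) => x []. Qed.

Lemma zpow_msucc (z : 'I_n -> R[i]) w a :
  zpow z (msucc (madd w a)) = zpow z a * zpow z (msucc w).
Proof.
rewrite /zpow -big_split /=; apply: eq_bigr => k _.
by rewrite !ffunE -exprD addnS addnC.
Qed.

Lemma zpow_neq0 (z : 'I_n -> R[i]) x : (forall k, z k != 0) -> zpow z x != 0.
Proof. by move=> hz; rewrite /zpow; apply/prodf_neq0 => k _; apply: expf_neq0. Qed.


Definition J0 (m x : mindex n) : {ffun 'I_n -> bool} := [ffun k => (m k <= x k)%N].
Definition t0 (m x : mindex n) : mindex n := [ffun k => minn (x k) (m k)].

Lemma shifted_uniq (m : mindex n) J tau x : Gamma m J tau -> shifted tau J x ->
  J = J0 m x /\ tau = t0 m x.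
Proof.
move=> [_ hG] [y ->]; split; apply/ffunP=> k; rewrite !ffunE; have := hG k;
  case: (J k) => h.
- by rewrite h leq_addr.
- by rewrite addn0 leqNgt h.
- by rewrite h; apply/esym/minn_idPr; apply: leq_addr.
- by rewrite addn0; apply/esym/minn_idPl; apply: ltnW.
Qed.

Lemma t0_Gamma (m x : mindex n) : Gamma m (J0 m x) (t0 m x).
Proof.
split; first by move=> k; rewrite ffunE geq_minr.
move=> k; rewrite !ffunE; case: (leqP (m k) (x k)) => h //.
Qed.

Lemma t0_shifted (m x : mindex n) : shifted (t0 m x) (J0 m x) x.
Proof.
exists [ffun k => (x k - m k)%N]; apply/ffunP => k; rewrite !ffunE.
case: (leqP (m k) (x k)) => h /=.
  by rewrite subnKC.
by rewrite addn0.
Qed.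

Lemma Ptau_t0 (c : mindex n -> R[i]) (m x : mindex n) z :
  Ptau c m (t0 m x) z = Ptau c m x z.
Proof.
have E : [set a | mle a m /\ ~ mle a (t0 m x)] = [set a | mle a m /\ ~ mle a x].
  apply/seteqP; split => a /= [am na]; split => //; apply: contra_not na => h k.
    by rewrite ffunE leq_min h am.
  by apply: leq_trans (h k) _; rewrite ffunE geq_minl.
by rewrite /Ptau E.
Qed.

Lemma Ptau_notX0 (c : mindex n -> R[i]) (m x : mindex n) z :
  ~ X0 m x -> Ptau c m x z = 0.
Proof.
move=> hx; have hm : mle m x by apply: contrapT.
apply: fsbig1 => a [am na]; exfalso; apply: na => k.
exact: leq_trans (am k) (hm k).
Qed.
End Main.
Lemma conv_self (I : choiceType) (K : numFieldType) (a : I -> K) :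
  (exists l, conv a l) -> conv a (fsum a).
Proof. by case=> l h; rewrite (conv_fsum h). Qed.

Lemma conv_scaler (I : choiceType) (K : numFieldType) (a : I -> K) l k :
  conv a l -> conv (fun i => a i * k) (l * k).
Proof.
move=> h; rewrite mulrC.
have -> : (fun i => a i * k) = (fun i => k * a i) by apply/funext=> i; rewrite mulrC.
exact: conv_scale.
Qed.

Lemma abs_scale (I : choiceType) (K : numFieldType) (a : I -> K) k :
  abs_summable a -> abs_summable (fun i => k * a i).
Proof.
move=> [M HM]; exists (`|k| * M) => A; rewrite !psE.
under eq_bigr do rewrite normrM.
by rewrite -mulr_sumr -psE ler_wpM2l.
Qed.

End Helpers.
Import Helpers.

Theorem theorem2 (R : realType) (n : nat) (hn : (0 < n)%N) (m : mindex n)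
  (c : mindex n -> R[i]) (hc : forall a, ~ mle a m -> c a = 0)
  (phi : mindex n -> R[i]) (hphi : forall x, ~ X0 m x -> phi x = 0)
  (f : mindex n -> R[i])
  (hrec : forall x : mindex n, \sum_(a \in Pi m) c a * f (madd x a) = 0)
  (hinit : forall x, X0 m x -> f x = phi x)
  (rho : R) (hrho : 0 <= rho)
  (hconv : forall z : 'I_n -> R[i], (forall k, (rho%:C)%C < `|z k|) ->
     abs_summable (fun x : mindex n => f x / zpow z (msucc x))) :
  forall z : 'I_n -> R[i], (forall k, (rho%:C)%C < `|z k|) ->
    Ppoly c m z * Fser f z =
    \sum_(J : {ffun 'I_n -> bool})
       \sum_(tau \in Gamma m J) Phi phi tau J z * Ptau c m tau z.
Proof.
move=> z hz.
have z0 : forall k, z k != 0.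
  move=> k; apply/negP => /eqP h; have := hz k; rewrite h normr0 => h'.
  have : (0 : R[i]) < 0 by apply: le_lt_trans h'; rewrite ler0c.
  by rewrite ltxx.
set g := fun x : mindex n => f x / zpow z (msucc x).
have gs : abs_summable g := hconv z hz.
have hg : conv g (Fser f z) by apply: conv_self; apply: ex_conv.
have hA := conv_scale (k := Ppoly c m z) hg.
pose C a := c a * zpow z a.
pose h a x := if `[< mle a x >] then C a * g x else 0.
pose lge a := fsum (fun w => g (madd w a)).
have inj_sh (a : mindex n) : injective (fun w : mindex n => madd w a).
  move=> w1 w2 /= /ffunP E; apply/ffunP => k; have := E k; rewrite !ffunE.
  exact: addIn.
have hk a : conv (fun w => C a * g (madd w a)) (C a * lge a).
  apply: conv_scale; apply: conv_self; apply: ex_conv; exact: abs_reindex (inj_sh a) gs.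
have hh a : conv (h a) (C a * lge a).
  apply: (@conv_reindex _ _ _ (fun w => madd w a) (fun x => [ffun k => (x k - a k)%N])
     (fun x => `[< mle a x >])).
  - by move=> y; apply/ffunP => k; rewrite !ffunE addnK.
  - by move=> x /asboolP hx; apply/ffunP => k; rewrite !ffunE subnK.
  - by move=> y; apply/asboolP => k; rewrite ffunE leq_addl.
  - by move=> x /negbTE hx; rewrite /h hx.
  have -> : (fun y => h a (madd y a)) = fun w => C a * g (madd w a).
    apply/funext => y; rewrite /h; suff -> : `[< mle a (madd y a) >] = true by [].
    by apply/asboolP => k; rewrite ffunE leq_addl.
  exact: hk.
have hsum0 : conv (fun x => \sum_(a \in Pi m) h a x) 0.
  have h1 := @conv_fsbig _ _ _ _ h (fun a => C a * lge a) (finite_Pi m) hh.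
  have h2 := @conv_fsbig _ _ _ _ (fun a w => C a * g (madd w a)) (fun a => C a * lge a)
     (finite_Pi m) hk.
  have E : (fun w => \sum_(a \in Pi m) C a * g (madd w a)) = fun=> 0.
    apply/funext => w.
    transitivity ((\sum_(a \in Pi m) c a * f (madd w a)) / zpow z (msucc w)); last first.
      by rewrite hrec mul0r.
    rewrite mulr_fsuml; apply: eq_fsbigr => a _.
    rewrite /C /g zpow_msucc invfM.
    have za := zpow_neq0 a z0.
    rewrite -!mulrA; congr (_ * _).
    by rewrite mulrCA mulVKf.
  rewrite E in h2; have e0 := conv_uniq h2 (@conv0 _ _).
  by rewrite e0 in h1.
have hB : (fun x => Ppoly c m z * g x) = fun x => \sum_(a \in Pi m) h a x + Ptau c m x z * g x.
  apply/funext => x; rewrite /Ppoly mulr_fsuml (fsbigID [set a | mle a x] (Pi m)); last exact: finite_Pi.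
  congr (_ + _); last by rewrite /Ptau mulr_fsuml.
  rewrite fsbig_mkcondr; apply: eq_fsbigr => a _; rewrite /h /C.
  case: (boolP `[< mle a x >]) => /asboolP H.
    by rewrite ifT // in_setE.
  by rewrite ifF //; apply/negbTE; rewrite notin_setE.
pose p := fun (tau : mindex n) (J : {ffun 'I_n -> bool}) (y : mindex n) =>
  if `[< shifted tau J y >] then phi y / zpow z (msucc y) else 0.
have hp tau J : conv (p tau J) (Phi phi tau J z).
  apply: conv_self; apply: ex_conv; apply: abs_le gs => x; rewrite /p /g.
  case: asboolP => _; last by rewrite normr0 normr_ge0.
  case: (pselect (X0 m x)) => hx; first by rewrite hinit.
  by rewrite hphi // mul0r normr0 normr_ge0.
have hD : conv (fun x => \sum_(J : {ffun 'I_n -> bool}) \sum_(tau \in Gamma m J) p tau J x * Ptau c m tau z)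
    (\sum_(J : {ffun 'I_n -> bool}) \sum_(tau \in Gamma m J) Phi phi tau J z * Ptau c m tau z).
  apply: (@conv_big _ _ _ _ (fun J x => \sum_(tau \in Gamma m J) p tau J x * Ptau c m tau z)
     (fun J => \sum_(tau \in Gamma m J) Phi phi tau J z * Ptau c m tau z)) => J.
  apply: (@conv_fsbig _ _ _ _ (fun tau x => p tau J x * Ptau c m tau z)
     (fun tau => Phi phi tau J z * Ptau c m tau z)) (finite_Gamma m J) _ => tau.
  exact: conv_scaler (hp tau J).
have hE : (fun x => \sum_(J : {ffun 'I_n -> bool}) \sum_(tau \in Gamma m J) p tau J x * Ptau c m tau z)
    = fun x => Ptau c m x z * g x.
  apply/funext => x.
  rewrite (bigD1 (J0 m x)) //= [X in _ + X]big1 ?addr0; last first.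
    move=> J hJ; apply: fsbig1 => tau hG; rewrite /p; case: asboolP => hs; last by rewrite mul0r.
    by case: (shifted_uniq hG hs) => eJ _; rewrite eJ eqxx in hJ.
  rewrite (fsbigD1 (t0 m x) _ _ (finite_Gamma m (J0 m x)) (t0_Gamma m x)).
  rewrite fsbig1 /=; last first.
    move=> tau [hG ht]; rewrite /p; case: asboolP => hs; last by rewrite mul0r.
    by case: (shifted_uniq hG hs) => _ et; exfalso; apply: ht; rewrite et.
  rewrite /p; case: asboolP => hs; last by exfalso; apply: hs; apply: t0_shifted.
  rewrite Ptau_t0 /g addr0; case: (pselect (X0 m x)) => hx; first by rewrite hinit // mulrC.
  by rewrite Ptau_notX0 // mulr0 mul0r.
have hF : conv (fun x => Ppoly c m z * g x)
   (0 + \sum_(J : {ffun 'I_n -> bool}) \sum_(tau \in Gamma m J) Phi phi tau J z * Ptau c m tau z).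
  rewrite hB; apply: conv_add hsum0 _; rewrite -hE; exact: hD.
by rewrite (conv_uniq hA hF) add0r.
Qed.
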